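(* For every $\tau\in\mathbb{R}$ and every constant $C$ with $0<C<1/\log 4$, there exists $N_0=N_0(C,\tau)$ such that for all integers $N\ge N_0$, \[ \mathfrak{m}_N(\tau) < \exp\!\left(-C(\log N)^2\right). \]
   Context: For a positive integer $N$ let $\mathcal{S}_N:=\left\{\sum_{n=1}^N \frac{s_n}{n} : s_1,\dots,s_N\in\{-1,+1\}\right\}$, and for $\tau\in\mathbb{R}$ let $\mathfrak{m}_N(\tau):=\min\{|\mathfrak{s}-\tau| : \mathfrak{s}\in\mathcal{S}_N\}$. *)

(* Defs.v *)
From Stdlib Require Import Reals List.
Open Scope R_scope.

Fixpoint sign_vectors (N : nat) : list (list R) :=
  match N with
  | O => nil :: nil
  | S n => flat_map (fun v => (v ++ (1 :: nil)) :: (v ++ (-1 :: nil)) :: nil)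
                    (sign_vectors n)
  end.

Fixpoint signed_harmonic_aux (k : nat) (s : list R) : R :=
  match s with
  | nil => 0
  | x :: t => x / INR k + signed_harmonic_aux (S k) t
  end.
Definition signed_harmonic (s : list R) : R := signed_harmonic_aux 1 s.

(* The finite list enumerating S_N (with repetitions). *)
Definition S_list (N : nat) : list R := map signed_harmonic (sign_vectors N).

Definition m_N (N : nat) (tau : R) : R :=
  match S_list N with
  | nil => 0
  | x :: l => fold_left (fun acc y => Rmin acc (Rabs (y - tau))) l (Rabs (x - tau))
  end.

(* Main.v *)
Require Import Defs.
From Stdlib Require Import Reals Lra Lia List.
From Coquelicot Require Import Coquelicot.
Open Scope R_scope.


Fixpoint W (k p : nat) (x : R) : R :=
  match k with
  | O => / x ^ p
  | S k' => W k' p x - W k' p (x + 2 ^ k')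
  end.

Lemma W_derive : forall k p x, 0 < x -> is_derive (W k p) x (- INR p * W k (S p) x).
Proof.
  intro k; induction k as [|k IH]; intros p x Hx.
  - simpl. 
    assert (Hp : x ^ p <> 0) by (apply pow_nonzero; lra).
    auto_derive. auto.
    destruct p as [|p]. simpl. field. lra.
    simpl pred. simpl (x ^ S p). field. repeat split; try lra; try (simpl in Hp; exact Hp).
    apply pow_nonzero; lra.
  - assert (H1 := IH p x Hx).
    assert (Hk : 0 < 2^k) by (apply pow_lt; lra).
    assert (H2 : is_derive (fun y => W k p (y + 2^k)) x (- INR p * W k (S p) (x + 2^k))).
    { assert (H3 : is_derive (fun y => y + 2^k) x 1).
      { auto_derive. auto. ring. }
      assert (H4 := is_derive_comp (W k p) (fun y => y + 2^k) x _ _ (IH p (x + 2^k) ltac:(lra)) H3).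
      unfold scal in H4; simpl in H4; unfold mult in H4; simpl in H4; rewrite Rmult_1_l in H4. exact H4. }
    assert (H5 := is_derive_minus _ _ _ _ _ H1 H2).
    replace (- INR p * W (S k) (S p) x) with (minus (- INR p * W k (S p) x) (- INR p * W k (S p) (x + 2 ^ k))).
    eapply is_derive_ext; [| exact H5]. intros; reflexivity.
    simpl. unfold minus, plus, opp; simpl. ring.
Qed.

Fixpoint cc (k p : nat) : R :=
  match k with
  | O => 1
  | S k' => 2 ^ k' * INR p * cc k' (S p)
  end.

Lemma cc_nonneg : forall k p, 0 <= cc k p.
Proof.
  induction k; intros p; simpl. lra.
  apply Rmult_le_pos; [apply Rmult_le_pos|]; auto.
  apply pow_le; lra. apply pos_INR.
Qed.

Lemma div_pow_anti : forall c a b e, 0 <= c -> 0 < a -> a <= b -> c / b ^ e <= c / a ^ e.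
Proof.
  intros. unfold Rdiv. apply Rmult_le_compat_l; auto.
  apply Rinv_le_contravar. apply pow_lt; lra. apply pow_incr; lra.
Qed.

Lemma W_bounds : forall k p x, 0 < x ->
  cc k p / (x + 2^k - 1)^(p+k) <= W k p x <= cc k p / x^(p+k).
Proof.
  intro k; induction k as [|k IH]; intros p x Hx.
  - simpl. rewrite Nat.add_0_r. replace (x + 1 - 1) with x by ring. lra.
  - assert (Hk : 1 <= 2^k) by (apply pow_R1_Rle; lra).
    destruct (MVT_gen (W k p) x (x + 2^k) (fun y => - INR p * W k (S p) y)) as [xi [Hxi Eq]].
    + intros y Hy. apply W_derive. 
      rewrite Rmin_left in Hy by lra. lra.
    + intros y Hy. rewrite Rmin_left in Hy by lra.
      apply continuity_pt_filterlim. apply (ex_derive_continuous (W k p)).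
      eexists. apply W_derive. lra.
    + rewrite Rmin_left in Hxi by lra. rewrite Rmax_right in Hxi by lra.
      assert (EW : W (S k) p x = INR p * 2^k * W k (S p) xi).
      { simpl. replace (x + 2^k - x) with (2^k) in Eq by ring. lra. }
      rewrite EW.
      assert (He : (p + S k = S p + k)%nat) by lia. rewrite He.
      destruct (IH (S p) xi ltac:(lra)) as [L U].
      assert (Hc := cc_nonneg k (S p)).
      assert (Hp := pos_INR p).
      assert (Hpk : 0 <= INR p * 2^k) by (apply Rmult_le_pos; lra).
      replace (cc (S k) p) with (INR p * 2^k * cc k (S p)) by (simpl; ring).
      unfold Rdiv. rewrite !Rmult_assoc. split.
      * apply Rmult_le_compat_l; [lra|]. apply Rmult_le_compat_l; [lra|].
        eapply Rle_trans; [| exact L]. apply (div_pow_anti (cc k (S p))); auto. lra.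
        simpl. lra.
      * apply Rmult_le_compat_l; [lra|]. apply Rmult_le_compat_l; [lra|].
        eapply Rle_trans; [exact U|]. apply (div_pow_anti (cc k (S p))); auto. lra.
Qed.

Lemma cc_shift : forall k p, INR p * cc k (S p) = INR (p + k) * cc k p.
Proof.
  induction k as [|k IH]; intros p.
  - simpl. rewrite Nat.add_0_r. ring.
  - cbn [cc]. 
    replace (INR p * (2 ^ k * INR (S p) * cc k (S (S p)))) with (2^k * INR p * (INR (S p) * cc k (S (S p)))) by ring.
    rewrite IH. replace (S p + k)%nat with (p + S k)%nat by lia. ring.
Qed.

Lemma cc_pos : forall k p, (1 <= p)%nat -> 0 < cc k p.
Proof.
  induction k as [|k IH]; intros p Hp; simpl. lra.
  apply Rmult_lt_0_compat; [apply Rmult_lt_0_compat|].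
  apply pow_lt; lra. apply lt_0_INR; lia. apply IH; lia.
Qed.

Lemma cc_S1 : forall k, cc (S k) 1 = 2^k * INR (S k) * cc k 1.
Proof.
  intros k. change (cc (S k) 1) with (2^k * INR 1 * cc k (S 1)). rewrite Rmult_assoc. rewrite (cc_shift k 1). replace (1 + k)%nat with (S k) by lia. ring.
Qed.

Fixpoint tri (k : nat) : nat := match k with O => O | S k' => (k' + tri k')%nat end.

Lemma cc_upper : forall k p, cc k p <= 2 ^ (tri k) * INR (p + k) ^ k.
Proof.
  induction k as [|k IH]; intros p.
  - simpl. lra.
  - simpl cc. simpl tri. rewrite pow_add.
    assert (H := IH (S p)). replace (S p + k)%nat with (p + S k)%nat in H by lia.
    assert (H1 : 0 <= INR p) by apply pos_INR.
    assert (H2 : INR p <= INR (p + S k)) by (apply le_INR; lia).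
    assert (H3 : 0 < 2^k) by (apply pow_lt; lra).
    assert (H4 : 0 <= 2^tri k) by (apply pow_le; lra).
    simpl (INR (p + S k) ^ S k).
    assert (H5 : 0 <= INR (p + S k) ^ k) by (apply pow_le; lra).
    assert (H6 : 0 <= cc k (S p)) by apply cc_nonneg.
    apply Rle_trans with (2 ^ k * INR p * (2 ^ tri k * INR (p + S k) ^ k)).
    apply Rmult_le_compat_l; [apply Rmult_le_pos; lra| exact H].
    assert (INR p * (2 ^ tri k * INR (p + S k) ^ k) <= INR (p + S k) * (2 ^ tri k * INR (p + S k) ^ k)).
    { apply Rmult_le_compat_r; [apply Rmult_le_pos; lra| exact H2]. }
    nra.
Qed.

Lemma tri_eq : forall k, 2 * INR (tri k) = INR k * (INR k - 1).
Proof.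
  induction k as [|k IH]; simpl tri. simpl; ring.
  rewrite plus_INR, S_INR. nra.
Qed.

Fixpoint tm (k : nat) : list R :=
  match k with
  | O => 1 :: nil
  | S k' => tm k' ++ map Ropp (tm k')
  end.

Lemma tm_length : forall k, length (tm k) = (2 ^ k)%nat.
Proof.
  induction k; simpl; auto. rewrite length_app, length_map, IHk. lia.
Qed.

Definition pm (l : list R) : Prop := List.Forall (fun x => x = 1 \/ x = -1) l.

Lemma tm_pm : forall k, pm (tm k).
Proof.
  unfold pm. induction k; simpl. constructor; auto.
  apply Forall_app; split; auto. apply Forall_map. eapply Forall_impl; [|exact IHk].
  intros a [-> | ->]; [right|left]; ring.
Qed.

Notation aux := signed_harmonic_aux.

Lemma aux_app : forall l1 l2 n, aux n (l1 ++ l2) = aux n l1 + aux (n + length l1) l2.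
Proof.
  induction l1 as [|a l1 IH]; intros l2 n; simpl.
  - rewrite Nat.add_0_r. ring.
  - rewrite IH. replace (S n + length l1)%nat with (n + S (length l1))%nat by lia. ring.
Qed.

Lemma aux_scale : forall l n e, aux n (map (Rmult e) l) = e * aux n l.
Proof.
  induction l as [|a l IH]; intros n e; simpl. ring.
  rewrite IH. unfold Rdiv. ring.
Qed.

Lemma aux_opp : forall l n, aux n (map Ropp l) = - aux n l.
Proof.
  induction l as [|a l IH]; intros n; simpl. ring.
  rewrite IH. unfold Rdiv. ring.
Qed.

Lemma INR_pow2 : forall k, INR (2 ^ k) = 2 ^ k.
Proof. intros. rewrite pow_INR. simpl. f_equal. Qed.

Lemma tm_val : forall k n, aux n (tm k) = W k 1 (INR n).
Proof.
  induction k as [|k IH]; intros n.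
  - simpl. rewrite Rmult_1_r. unfold Rdiv. ring.
  - simpl tm. rewrite aux_app, aux_opp, !IH, tm_length. simpl W.
    rewrite plus_INR, INR_pow2. ring.
Qed.

Lemma pm_scale : forall l e, (e = 1 \/ e = -1) -> pm l -> pm (map (Rmult e) l).
Proof.
  unfold pm. intros l e He H. apply Forall_map. eapply Forall_impl; [|exact H].
  intros a [-> | ->]; destruct He as [-> | ->]; [left|right|right|left]; ring.
Qed.

Definition Good (n L : nat) (A d : R) : Prop :=
  forall t, Rabs t <= A + d ->
  exists q, length q = L /\ pm q /\ Rabs (t - aux n q) <= d.

Fixpoint sumL (l : list R) : R := match l with nil => 0 | a :: r => a + sumL r end.

Fixpoint vals (n : nat) (ps : list (list R)) : list R :=
  match ps with nil => nil | p :: ps' => aux n p :: vals (n + length p) ps' end.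

Fixpoint totlen (ps : list (list R)) : nat :=
  match ps with nil => O | p :: ps' => (length p + totlen ps')%nat end.

Fixpoint Pc (l : list R) (d : R) : Prop :=
  match l with nil => True | a :: r => 0 <= a /\ a <= sumL r + d /\ Pc r d end.

Lemma greedy : forall ps n d, List.Forall pm ps -> Pc (vals n ps) d ->
  Good n (totlen ps) (sumL (vals n ps)) d.
Proof.
  induction ps as [|p ps IH]; intros n d Hpm HP t Ht; simpl in *.
  - exists nil. repeat split; auto. constructor. simpl. rewrite Rminus_0_r. lra.
  - inversion Hpm as [|? ? Hp Hps]; subst.
    destruct HP as [H0 [H1 H2]].
    set (a := aux n p) in *. set (R0 := sumL (vals (n + length p) ps)) in *.
    set (e := if Rle_dec 0 t then 1 else -1).
    assert (He : e = 1 \/ e = -1) by (unfold e; destruct Rle_dec; auto).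
    assert (Ht' : Rabs (t - e * a) <= R0 + d).
    { unfold e; destruct Rle_dec.
      - rewrite Rabs_pos_eq in Ht by lra. unfold Rabs; destruct Rcase_abs; lra.
      - rewrite Rabs_left in Ht by lra. unfold Rabs; destruct Rcase_abs; lra. }
    destruct (IH (n + length p)%nat d Hps H2 (t - e * a) Ht') as [q [Hl [Hq Hd]]].
    exists (map (Rmult e) p ++ q). split; [|split].
    + rewrite length_app, length_map, Hl. reflexivity.
    + apply Forall_app. split; auto. apply pm_scale; auto.
    + rewrite aux_app, aux_scale, length_map. fold a.
      replace (t - (e * a + aux (n + length p) q)) with (t - e * a - aux (n + length p) q) by ring.
      exact Hd.
Qed.

Lemma Good_mono : forall n L A A' d, A' <= A -> Good n L A d -> Good n L A' d.
Proof. intros n L A A' d H G t Ht. apply G. lra. Qed.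

Lemma Good_combine : forall n2 L2 A2 L1 A1 d,
  Good (n2 + L2) L1 A1 (A2 + d) -> Good n2 L2 A2 d -> Good n2 (L2 + L1) (A1 + A2) d.
Proof.
  intros n2 L2 A2 L1 A1 d G1 G2 t Ht.
  destruct (G1 t ltac:(lra)) as [q1 [Hl1 [Hp1 Hd1]]].
  destruct (G2 (t - aux (n2 + L2) q1) Hd1) as [q2 [Hl2 [Hp2 Hd2]]].
  exists (q2 ++ q1). split; [|split].
  - rewrite length_app; lia.
  - apply Forall_app; auto.
  - rewrite aux_app, Hl2.
    replace (t - (aux n2 q2 + aux (n2 + L2) q1)) with (t - aux (n2 + L2) q1 - aux n2 q2) by ring.
    exact Hd2.
Qed.

Lemma W_pos : forall k x, 0 < x -> 0 < W k 1 x.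
Proof.
  intros k x Hx. destruct (W_bounds k 1 x Hx) as [L _].
  eapply Rlt_le_trans; [|exact L]. unfold Rdiv. apply Rmult_lt_0_compat.
  apply cc_pos; lia. apply Rinv_0_lt_compat. apply pow_lt.
  assert (1 <= 2^k) by (apply pow_R1_Rle; lra). lra.
Qed.

Lemma INR_pos1 : forall n, (1 <= n)%nat -> 0 < INR n.
Proof. intros. apply lt_0_INR. lia. Qed.

Lemma vals_cons_tm : forall k n ps, vals n (tm k :: ps) = W k 1 (INR n) :: vals (n + 2^k) ps.
Proof. intros. simpl. rewrite tm_val, tm_length. reflexivity. Qed.

Lemma totlen_rep : forall k m, totlen (repeat (tm k) m) = (m * 2^k)%nat.
Proof. induction m; simpl; auto. rewrite tm_length, IHm. lia. Qed.

Lemma sum_nonneg : forall k m n, (1 <= n)%nat -> 0 <= sumL (vals n (repeat (tm k) m)).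
Proof.
  induction m; intros n Hn. simpl; lra.
  simpl repeat. rewrite vals_cons_tm. simpl sumL.
  assert (H := W_pos k (INR n) (INR_pos1 n Hn)).
  assert (H2 := IHm (n + 2^k)%nat ltac:(lia)). lra.
Qed.

Lemma sum_lower : forall k L m n, 
  (forall i, (i < m)%nat -> L <= W k 1 (INR (n + i * 2^k))) ->
  INR m * L <= sumL (vals n (repeat (tm k) m)).
Proof.
  induction m; intros n H. simpl; lra.
  simpl repeat. rewrite vals_cons_tm. simpl sumL. rewrite S_INR.
  assert (H1 : L <= W k 1 (INR n)).
  { assert (H0 := H O ltac:(lia)). rewrite Nat.mul_0_l, Nat.add_0_r in H0. exact H0. }
  assert (H2 : INR m * L <= sumL (vals (n + 2^k) (repeat (tm k) m))).
  { apply IHm. intros i Hi. replace (n + 2^k + i * 2^k)%nat with (n + S i * 2^k)%nat by (simpl; lia).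
    apply H; lia. }
  lra.
Qed.

Lemma level_Pc : forall k S m n, (1 <= n)%nat ->
  (forall j, (n <= j)%nat -> W (Datatypes.S k) 1 (INR j) <= S) ->
  W k 1 (INR (n + m * 2^k)) <= S ->
  Pc (vals n (repeat (tm k) (Datatypes.S m))) S.
Proof.
  intros k S. induction m; intros n Hn H2 H3.
  - simpl repeat. rewrite vals_cons_tm. simpl. rewrite Nat.add_0_r in H3.
    split; [|split; auto]. left; apply W_pos, INR_pos1; auto. lra.
  - change (repeat (tm k) (Datatypes.S (Datatypes.S m))) with (tm k :: repeat (tm k) (Datatypes.S m)).
    rewrite vals_cons_tm. split; [|split].
    + left; apply W_pos, INR_pos1; auto.
    + change (repeat (tm k) (Datatypes.S m)) with (tm k :: repeat (tm k) m).
      rewrite vals_cons_tm. simpl sumL.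
      assert (E : W k 1 (INR n) = W k 1 (INR (n + 2^k)) + W (Datatypes.S k) 1 (INR n)).
      { change (W (Datatypes.S k) 1 (INR n)) with (W k 1 (INR n) - W k 1 (INR n + 2^k)). rewrite plus_INR, INR_pow2. ring. }
      assert (H4 := H2 n (le_n n)).
      assert (H5 := sum_nonneg k m (n + 2^k + 2^k)%nat ltac:(lia)).
      lra.
    + apply IHm. lia. intros j Hj. apply H2. lia.
      replace (n + 2^k + m * 2^k)%nat with (n + Datatypes.S m * 2^k)%nat by (simpl; lia). exact H3.
Qed.

Lemma level_Good : forall k S m n, (1 <= n)%nat ->
  (forall j, (n <= j)%nat -> W (Datatypes.S k) 1 (INR j) <= S) ->
  W k 1 (INR (n + m * 2^k)) <= S ->
  Good n (Datatypes.S m * 2^k) (sumL (vals n (repeat (tm k) (Datatypes.S m)))) S.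
Proof.
  intros. rewrite <- totlen_rep. apply greedy.
  apply Forall_forall. intros x Hx. apply repeat_spec in Hx. subst. apply tm_pm.
  apply level_Pc; auto.
Qed.

Lemma in_sign_vectors : forall l, pm l -> In l (sign_vectors (length l)).
Proof.
  intros l. induction l as [|x l IH] using rev_ind; intros H.
  - simpl. auto.
  - unfold pm in H. apply Forall_app in H. destruct H as [H1 H2].
    inversion H2 as [|? ? Hx _]; subst.
    rewrite length_app. simpl length. rewrite Nat.add_1_r. simpl sign_vectors.
    apply in_flat_map. exists l. split. apply IH. exact H1.
    destruct Hx as [-> | ->]; simpl; auto.
Qed.

Lemma fold_min_le : forall tau l a, fold_left (fun acc y => Rmin acc (Rabs (y - tau))) l a <= a
  /\ forall y, In y l -> fold_left (fun acc y => Rmin acc (Rabs (y - tau))) l a <= Rabs (y - tau).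
Proof.
  intros tau l. induction l as [|b l IH]; intros a; simpl.
  - split. lra. intros y [].
  - destruct (IH (Rmin a (Rabs (b - tau)))) as [H1 H2]. split.
    + eapply Rle_trans; [exact H1|]. apply Rmin_l.
    + intros y [<- | Hy]. eapply Rle_trans; [exact H1|]. apply Rmin_r. auto.
Qed.

Lemma m_N_le : forall N tau l, In l (sign_vectors N) -> m_N N tau <= Rabs (signed_harmonic l - tau).
Proof.
  intros N tau l H. unfold m_N.
  assert (Hin : In (signed_harmonic l) (S_list N)) by (unfold S_list; apply in_map; auto).
  destruct (S_list N) as [|x r]. destruct Hin.
  destruct (fold_min_le tau r (Rabs (x - tau))) as [H1 H2].
  destruct Hin as [<- | Hin]. exact H1. apply H2; auto.
Qed.

Fixpoint alt (s : R) (L : nat) : list R :=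
  match L with O => nil | S L' => s :: alt (- s) L' end.

Lemma alt_length : forall L s, length (alt s L) = L.
Proof. induction L; simpl; auto. Qed.

Lemma alt_pm : forall L s, (s = 1 \/ s = -1) -> pm (alt s L).
Proof.
  unfold pm. induction L; intros s Hs; simpl; constructor; auto.
  apply IHL. destruct Hs as [-> | ->]; [right|left]; ring.
Qed.

Lemma alt_bound : forall L s n, (s = 1 \/ s = -1) -> (1 <= n)%nat ->
  0 <= s * aux n (alt s L) <= 1 / INR n.
Proof.
  induction L; intros s n Hs Hn; simpl.
  - assert (0 < INR n) by (apply INR_pos1; auto). 
    rewrite Rmult_0_r. split. lra. unfold Rdiv; rewrite Rmult_1_l. left; apply Rinv_0_lt_compat; lra.
  - assert (Hs' : - s = 1 \/ - s = -1) by (destruct Hs as [-> | ->]; [right|left]; ring).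
    destruct (IHL (- s) (S n) Hs' ltac:(lia)) as [H1 H2].
    assert (Hss : s * s = 1) by (destruct Hs as [-> | ->]; ring).
    assert (Hn0 : 0 < INR n) by (apply INR_pos1; auto).
    assert (E : s * (s / INR n + aux (S n) (alt (- s) L)) = 1 / INR n - (- s * aux (S n) (alt (- s) L))).
    { unfold Rdiv. replace (s * (s * / INR n + aux (S n) (alt (- s) L))) with (s * s * / INR n + s * aux (S n) (alt (- s) L)) by ring.
      rewrite Hss. ring. }
    rewrite E. rewrite S_INR in H2.
    assert (1 / (INR n + 1) <= 1 / INR n).
    { unfold Rdiv. rewrite !Rmult_1_l. apply Rinv_le_contravar; lra. }
    lra.
Qed.


Lemma ln_step : forall x, 0 < x -> ln (x + 1) - ln x <= 1 / x.
Proof.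
  intros x Hx. 
  assert (E : x + 1 = x * (1 + 1 / x)) by (field; lra).
  rewrite E, ln_mult by (try lra; unfold Rdiv; assert (0 < / x) by (apply Rinv_0_lt_compat; lra); lra).
  assert (H : ln (1 + 1/x) <= 1/x).
  { assert (H1 := exp_ineq1_le (1/x)). rewrite <- (ln_exp (1/x)) at 2.
    assert (0 < / x) by (apply Rinv_0_lt_compat; lra).
    apply ln_le; auto. unfold Rdiv; lra. }
  lra.
Qed.

Lemma harmonic : forall m n, (1 <= n)%nat ->
  ln (INR (n + m)) - ln (INR n) <= sumL (vals n (repeat (tm 0) m)).
Proof.
  induction m; intros n Hn.
  - rewrite Nat.add_0_r. simpl. lra.
  - change (repeat (tm 0) (S m)) with (tm 0 :: repeat (tm 0) m). rewrite vals_cons_tm. simpl sumL.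
    assert (H := IHm (n + 1)%nat ltac:(lia)).
    replace (n + 1 + m)%nat with (n + S m)%nat in H by lia.
    replace (n + 2^0)%nat with (n + 1)%nat by (simpl; lia).
    rewrite (plus_INR n 1) in H. change (INR 1) with 1 in H.
    assert (H2 := ln_step (INR n) (INR_pos1 n Hn)).
    change (W 0 1 (INR n)) with (/ (INR n * 1)). rewrite Rmult_1_r. unfold Rdiv in H2. rewrite Rmult_1_l in H2. change (1 :: nil) with (tm 0). lra.
Qed.

Lemma key_real : forall (k : nat) (a b c f G : R), (1 <= k)%nat -> 0 < f -> 0 <= a <= f ->
  a - b >= 2 * f / (INR k + 4) -> c - 1 >= f * (INR k + 2) / INR k -> 0 < G ->
  (G * a) ^ (k + 2) <= G / 2 * (a - b) * (INR k + 1) * (G * (c - 1)) ^ (k + 1).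
Proof.
  intros k a b c f G Hk Hf Ha Hab Hc HG.
  set (x := INR k) in *.
  assert (Hx : 1 <= x) by (unfold x; apply (le_INR 1 k) in Hk; simpl in Hk; lra).
  rewrite !Rpow_mult_distr.
  assert (HGk : 0 < G ^ (k+1)) by (apply pow_lt; lra).
  replace (G ^ (k + 2)) with (G * G ^ (k+1)) by (replace (k+2)%nat with (S (k+1)) by lia; reflexivity).
  assert (Ha2 : a ^ (k+2) <= f ^ (k+2)) by (apply pow_incr; lra).
  replace (f ^ (k+2)) with (f * f ^ (k+1)) in Ha2 by (replace (k+2)%nat with (S (k+1)) by lia; reflexivity).
  assert (Hf1 : 0 < f ^ (k+1)) by (apply pow_lt; lra).
  assert (Hc1 : f ^ (k+1) * (1 + INR (k+1) * (2 / x)) <= (c - 1) ^ (k+1)).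
  { apply Rle_trans with (f ^ (k+1) * (1 + 2/x) ^ (k+1)).
    apply Rmult_le_compat_l; [lra|]. apply Rle_pow_lin. unfold Rdiv. 
    assert (0 < / x) by (apply Rinv_0_lt_compat; lra). lra.
    rewrite <- Rpow_mult_distr. apply pow_incr. split.
    apply Rmult_le_pos; [lra|]. unfold Rdiv. assert (0 < / x) by (apply Rinv_0_lt_compat; lra). lra.
    replace (f * (1 + 2 / x)) with (f * (x + 2) / x) by (field; lra). lra. }
  rewrite plus_INR in Hc1. simpl (INR 1) in Hc1. fold x in Hc1.
  assert (Hab' : a - b >= 2 * f / (x + 4)) by exact Hab.
  assert (Hq : 1 <= (x + 1) / (x + 4) * (1 + (x + 1) * (2 / x))).
  { apply Rmult_le_reg_r with (x * (x + 4)). nra.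
    replace ((x + 1) / (x + 4) * (1 + (x + 1) * (2 / x)) * (x * (x + 4))) with ((x+1) * (3 * x + 2)) by (field; lra).
    nra. }
  assert (Hab2 : (a - b) * (x + 1) / 2 >= f * ((x + 1) / (x + 4))).
  { unfold Rdiv in *. nra. }
  assert (Hc0 : 0 <= (c - 1) ^ (k+1)).
  { assert (0 < f*(x+2)/x) by (unfold Rdiv; apply Rmult_lt_0_compat; [nra| apply Rinv_0_lt_compat; lra]). apply pow_le; lra. }
  assert (Hmain : a ^ (k+2) <= (a - b) * (x + 1) / 2 * (c - 1) ^ (k+1)).
  { apply Rle_trans with (f * f ^ (k+1)); [exact Ha2|].
    apply Rle_trans with (f * ((x + 1) / (x + 4)) * (f ^ (k+1) * (1 + (x + 1) * (2 / x)))).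
    - replace (f * ((x + 1) / (x + 4)) * (f ^ (k + 1) * (1 + (x + 1) * (2 / x))))
        with (f * f ^ (k+1) * ((x + 1) / (x + 4) * (1 + (x + 1) * (2 / x)))) by ring.
      assert (0 < f * f ^ (k+1)) by (apply Rmult_lt_0_compat; lra). nra.
    - apply Rmult_le_compat. 
      apply Rmult_le_pos; [lra|]. unfold Rdiv; apply Rmult_le_pos; [lra|]. left; apply Rinv_0_lt_compat; lra.
      apply Rmult_le_pos; [lra|]. unfold Rdiv. assert (0 < / x) by (apply Rinv_0_lt_compat; lra). nra.
      lra. lra. }
  assert (HG2 : 0 < G * G ^ (k+1)) by (apply Rmult_lt_0_compat; lra).
  replace (G / 2 * (a - b) * (x + 1) * (G ^ (k + 1) * (c - 1) ^ (k + 1)))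
    with (G * G ^ (k+1) * ((a - b) * (x + 1) / 2 * (c - 1) ^ (k + 1))) by (field).
  apply Rmult_le_compat_l; lra.
Qed.

Definition Yp K := (2*K+4)%nat.
Definition Pp K := ((K+1)*(K+2)*(K+3))%nat.
Definition Dd k := ((k+1)*(k+2)*(k+3))%nat.
Definition u K k := (Yp K * Pp K / Dd k)%nat.
Definition Bp K k := (2^K * u K k)%nat.
Definition F K k : R := INR (Yp K * Pp K) / INR (Dd k).

Lemma div_bounds : forall a b, (0 < b)%nat ->
  INR (a / b) <= INR a / INR b /\ INR a / INR b - 1 < INR (a / b).
Proof.
  intros a b Hb.
  assert (E := Nat.div_mod_eq a b). assert (Hr := Nat.mod_upper_bound a b ltac:(lia)).
  assert (Hb' : 0 < INR b) by (apply lt_0_INR; lia).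
  apply (f_equal INR) in E. rewrite plus_INR, mult_INR in E.
  apply lt_INR in Hr. assert (Hr0 := pos_INR (a mod b)).
  split.
  - apply Rmult_le_reg_r with (INR b); auto. unfold Rdiv. rewrite Rmult_assoc, Rinv_l by lra. nra.
  - apply Rmult_lt_reg_r with (INR b); auto. unfold Rdiv. 
    replace ((INR a * / INR b - 1) * INR b) with (INR a - INR b) by (field; lra). nra.
Qed.

Lemma Dd_pos : forall k, (0 < Dd k)%nat.
Proof. intros; unfold Dd; nia. Qed.

Lemma u_bounds : forall K k, F K k - 1 < INR (u K k) <= F K k.
Proof.
  intros K k. destruct (div_bounds (Yp K * Pp K) (Dd k) (Dd_pos k)). unfold F, u. lra.
Qed.

Lemma F_ge : forall K k, (k <= K)%nat -> INR (Yp K) <= F K k.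
Proof.
  intros K k Hk. unfold F. rewrite mult_INR.
  assert (H1 : 0 < INR (Dd k)) by (apply lt_0_INR, Dd_pos).
  assert (H2 : INR (Dd k) <= INR (Pp K)) by (apply le_INR; unfold Dd, Pp; 
     apply Nat.mul_le_mono; [apply Nat.mul_le_mono|]; lia).
  assert (H3 : 0 <= INR (Yp K)) by apply pos_INR.
  apply Rmult_le_reg_r with (INR (Dd k)); auto. unfold Rdiv. rewrite Rmult_assoc, Rinv_l by lra. nra.
Qed.

Lemma Yp_R : forall K, INR (Yp K) = 2 * INR K + 4.
Proof. intros. unfold Yp. rewrite plus_INR, mult_INR. simpl. ring. Qed.

Lemma F_rel : forall K j, F K j * (INR j + 1) = F K (S j) * (INR j + 4).
Proof.
  intros K j. unfold F, Dd. rewrite !mult_INR, !plus_INR. rewrite S_INR. simpl (INR 1). simpl (INR 2). simpl (INR 3).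
  assert (0 <= INR j) by apply pos_INR.
  replace (INR (S (S (S (S j))))) with (INR j + 4) by (rewrite !S_INR; ring).
  replace (INR (S (S (S j)))) with (INR j + 3) by (rewrite !S_INR; ring).
  replace (INR (S (S j))) with (INR j + 2) by (rewrite !S_INR; ring).
  replace (INR (S j)) with (INR j + 1) by (rewrite !S_INR; ring).
  change (INR 0) with 0. field. repeat split; lra.
Qed.

Definition mS K j := (2^(K - S j) * (u K j - u K (S j)))%nat.

Lemma u_pos : forall K k, (k <= K)%nat -> INR (2 * K + 3) < INR (u K k).
Proof.
  intros. destruct (u_bounds K k) as [Ha Hb]. assert (H1 := F_ge K k H). rewrite Yp_R in H1.
  rewrite plus_INR, mult_INR. simpl (INR 2). simpl (INR 3). lra.
Qed.

Lemma u_dec : forall K j, (S j <= K)%nat -> (u K (S j) + 5 < u K j)%nat.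
Proof.
  intros K j Hj. apply INR_lt. rewrite plus_INR. simpl (INR 5).
  destruct (u_bounds K j) as [H1 _]. destruct (u_bounds K (S j)) as [_ H2].
  assert (H3 := F_ge K (S j) Hj). rewrite Yp_R in H3.
  assert (H4 := F_rel K j).
  assert (Hj' : INR (S j) <= INR K) by (apply le_INR; auto). rewrite S_INR in Hj'.
  assert (H0 : 0 <= INR j) by apply pos_INR.
  assert (H5 : F K (S j) + 6 <= F K j).
  { apply Rmult_le_reg_r with (INR j + 1). lra. rewrite H4. nra. }
  lra.
Qed.

Lemma pow2_split : forall K k, (k <= K)%nat -> (2^(K - k) * 2^k = 2^K)%nat.
Proof. intros. rewrite <- Nat.pow_add_r. f_equal. lia. Qed.

Lemma mS_ge1 : forall K j, (S j <= K)%nat -> (1 <= mS K j)%nat.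
Proof.
  intros. unfold mS. assert (H1 := u_dec K j H). 
  assert (H2 : (1 <= 2^(K - S j))%nat) by (apply Nat.le_succ_l, Nat.neq_0_lt_0, Nat.pow_nonzero; lia).
  nia.
Qed.

Lemma mS_nat : forall K j, (S j <= K)%nat -> (mS K j * 2^(S j) = 2^K * (u K j - u K (S j)))%nat.
Proof.
  intros. unfold mS. rewrite <- (pow2_split K (S j) H). ring.
Qed.

Lemma Bp_step : forall K j, (S j <= K)%nat -> (Bp K (S j) + mS K j * 2^(S j) = Bp K j)%nat.
Proof.
  intros. rewrite mS_nat by auto. unfold Bp. assert (H1 := u_dec K j H). nia.
Qed.

Lemma Bp_R : forall K k, INR (Bp K k) = 2^K * INR (u K k).
Proof. intros. unfold Bp. rewrite mult_INR, INR_pow2. reflexivity. Qed.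

Lemma mS_R : forall K j, (S j <= K)%nat ->
  INR (mS K j) * 2^(S j) = 2^K * (INR (u K j) - INR (u K (S j))).
Proof.
  intros. rewrite <- INR_pow2, <- mult_INR, mS_nat by auto. rewrite mult_INR, INR_pow2.
  rewrite minus_INR. reflexivity. assert (H1 := u_dec K j H). lia.
Qed.

Lemma div_le_cross : forall a b c d, 0 < b -> 0 < d -> a * d <= c * b -> a / b <= c / d.
Proof.
  intros. apply Rmult_le_reg_r with (b * d). nra.
  replace (a / b * (b * d)) with (a * d) by (field; lra).
  replace (c / d * (b * d)) with (c * b) by (field; lra). lra.
Qed.

Definition lbS K j := INR (mS K j) * cc (S j) 1 / INR (Bp K j) ^ (1 + S j).

Lemma AR1 : forall K j, (S (S j) <= K)%nat ->
  W (S j) 1 (INR (Bp K (S j) + (mS K j - 1) * 2^(S j))) <= lbS K (S j).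
Proof.
  intros K j Hj.
  set (k := S j).
  set (G := 2 ^ K).
  set (a := INR (u K k)). set (b := INR (u K (S k))). set (c := INR (u K j)). set (f := F K k).
  assert (HG : 0 < G) by (apply pow_lt; lra).
  assert (Hk2 : 2 ^ k <= G) by (apply Rle_pow; [lra | unfold k; lia]).
  assert (Hk2' : 0 < 2 ^ k) by (apply pow_lt; lra).
  assert (Hm1 := mS_ge1 K j ltac:(lia)).
  assert (Hst := Bp_step K j ltac:(lia)). fold k in Hst.
  set (last := (Bp K k + (mS K j - 1) * 2 ^ k)%nat).
  assert (Hlast : INR last = G * c - 2 ^ k).
  { unfold last. apply (f_equal INR) in Hst. rewrite plus_INR, mult_INR, INR_pow2 in Hst.
    rewrite plus_INR, mult_INR, INR_pow2, minus_INR by lia. simpl (INR 1).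
    rewrite !Bp_R in Hst. rewrite Bp_R. fold G a c in Hst |- *. lra. }
  assert (Hfk := F_ge K k ltac:(unfold k; lia)). rewrite Yp_R in Hfk. fold f in Hfk.
  assert (HK : INR (S (S j)) <= INR K) by (apply le_INR; auto).
  rewrite !S_INR in HK.
  assert (Hj0 : 0 <= INR j) by apply pos_INR.
  destruct (u_bounds K k) as [Ha1 Ha2]. fold a f in Ha1, Ha2.
  destruct (u_bounds K (S k)) as [_ Hb2]. fold b in Hb2.
  destruct (u_bounds K j) as [Hc1 _]. fold c in Hc1.
  assert (R1 := F_rel K j). fold k f in R1.
  assert (R2 := F_rel K k). fold f in R2.
  assert (Hkx : INR k = INR j + 1) by (unfold k; rewrite S_INR; ring).
  rewrite Hkx in R2.
  assert (Hf0 : 0 < f) by lra.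
  assert (Hab : a - b >= 2 * f / (INR k + 4)).
  { rewrite Hkx. apply Rle_ge. apply Rmult_le_reg_r with (INR j + 1 + 4). lra.
    replace (2 * f / (INR j + 1 + 4) * (INR j + 1 + 4)) with (2 * f) by (field; lra).
    nra. }
  assert (Hc : c - 1 >= f * (INR k + 2) / INR k).
  { rewrite Hkx. apply Rle_ge. apply Rmult_le_reg_r with (INR j + 1). lra.
    replace (f * (INR j + 1 + 2) / (INR j + 1) * (INR j + 1)) with (f * (INR j + 3)) by (field; lra).
    nra. }
  assert (Hkey := key_real k a b c f G ltac:(unfold k; lia) Hf0 ltac:(split; lra) Hab Hc HG).
  assert (Hc1' : 0 < G * (c - 1)).
  { apply Rmult_lt_0_compat; auto. 
    assert (f * (INR k + 2) / INR k > 0). 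
    { rewrite Hkx. unfold Rdiv. apply Rmult_lt_0_compat. nra. apply Rinv_0_lt_compat. lra. }
    lra. }
  assert (HlastG : G * (c - 1) <= INR last) by (rewrite Hlast; nra).
  destruct (W_bounds k 1 (INR last) ltac:(lra)) as [_ HW].
  eapply Rle_trans; [exact HW|].
  assert (Hcc := cc_pos k 1 ltac:(lia)).
  eapply Rle_trans; [apply (div_pow_anti (cc k 1) (G * (c - 1)) (INR last)); lra|].
  unfold lbS. fold k.
  rewrite cc_S1. rewrite Bp_R. fold G a.
  assert (HmR := mS_R K k ltac:(unfold k; lia)). fold a b G in HmR.
  assert (Ha0 : 0 < G * a) by (apply Rmult_lt_0_compat; lra).
  apply div_le_cross. apply pow_lt; lra. apply pow_lt; lra.
  replace (1 + k)%nat with (k + 1)%nat by lia.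
  replace (1 + S k)%nat with (k + 2)%nat by lia.
  rewrite S_INR.
  replace (INR (mS K k) * (2 ^ k * (INR k + 1) * cc k 1)) with (cc k 1 * (INR (mS K k) * 2 ^ S k / 2 * (INR k + 1))) by (simpl; field).
  rewrite HmR.
  replace (cc k 1 * (G * (a - b) / 2 * (INR k + 1)) * (G * (c - 1)) ^ (k + 1))
    with (cc k 1 * (G / 2 * (a - b) * (INR k + 1) * (G * (c - 1)) ^ (k + 1))) by field.
  apply Rmult_le_compat_l; lra.
Qed.

Definition Nreq (Lam K : nat) : nat := (Lam * 2^K * (Yp K * Pp K))%nat.

Lemma F0_eq : forall K, INR (Yp K * Pp K) = 6 * F K 0.
Proof. intros. unfold F, Dd. simpl (INR ((0+1)*(0+2)*(0+3))). field. Qed.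

Lemma Bp0_le : forall K Lam N, (1 <= Lam)%nat -> (Nreq Lam K <= N)%nat ->
  INR Lam * INR (Bp K 0) * 6 <= INR N.
Proof.
  intros K Lam N HL HN. apply le_INR in HN. unfold Nreq in HN. rewrite !mult_INR, INR_pow2 in HN.
  rewrite <- mult_INR, F0_eq in HN. rewrite Bp_R.
  destruct (u_bounds K 0) as [_ H]. 
  assert (0 <= INR Lam) by apply pos_INR. assert (0 < 2^K) by (apply pow_lt; lra).
  assert (INR Lam * (2^K * INR (u K 0)) <= INR Lam * (2^K * F K 0)).
  { apply Rmult_le_compat_l; auto. apply Rmult_le_compat_l; lra. }
  nra.
Qed.

Lemma AR0 : forall K Lam N, (1 <= Lam)%nat -> (1 <= K)%nat -> (Nreq Lam K <= N)%nat ->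
  W 0 1 (INR N) <= lbS K 0.
Proof.
  intros K Lam N HL HK HN.
  set (G := 2 ^ K). assert (HG : 0 < G) by (apply pow_lt; lra).
  set (a := INR (u K 0)). set (b := INR (u K 1)). set (f := F K 0).
  destruct (u_bounds K 0) as [Ha1 Ha2]. fold a f in Ha1, Ha2.
  destruct (u_bounds K 1) as [_ Hb2]. fold b in Hb2.
  assert (R := F_rel K 0). fold f in R. simpl (INR 0) in R.
  assert (Hf := F_ge K 0 ltac:(lia)). rewrite Yp_R in Hf. fold f in Hf.
  assert (HK0 := pos_INR K).
  assert (HN' := le_INR _ _ HN). unfold Nreq in HN'. rewrite !mult_INR, INR_pow2 in HN'.
  rewrite <- mult_INR, F0_eq in HN'. fold G f in HN'.
  assert (HL' : 1 <= INR Lam) by (apply (le_INR 1); auto).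
  assert (HNf : 6 * G * f <= INR N).
  { eapply Rle_trans; [|exact HN']. assert (0 <= G * f) by (apply Rmult_le_pos; lra). nra. }
  assert (HmR := mS_R K 0 ltac:(lia)). fold a b G in HmR. simpl (2 ^ 1) in HmR.
  unfold lbS. simpl (1 + 1)%nat. rewrite Bp_R. fold G a.
  replace (cc 1 1) with 1 by (simpl; ring).
  simpl W.
  assert (Ha0 : 0 < G * a) by (apply Rmult_lt_0_compat; lra).
  assert (HN0 : 0 < INR N) by nra.
  rewrite Rmult_1_r. replace (/ INR N) with (1 / INR N) by (unfold Rdiv; ring).
  apply div_le_cross; auto. apply pow_lt; lra.
  assert (Hab : a - b >= f / 2) by lra.
  assert (Hm : INR (mS K 0) = G * (a - b) / 2) by lra.
  rewrite Hm. simpl pow. rewrite !Rmult_1_r.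
  assert (G * a * (G * a) <= G * f * (G * f)).
  { assert (0 <= G * a) by lra. apply Rmult_le_compat; nra. }
  assert (G * f * (G * f) <= G * (a - b) / 2 * 1 * INR N).
  { assert (0 < G * f) by nra. assert (Hx : f / 2 * (6 * G * f) <= (a - b) * INR N) by (apply Rmult_le_compat; nra). nra. }
  lra.
Qed.


Definition dlt K := cc K 1 / INR (Bp K K) ^ (1 + K).

Lemma upper_from : forall k x y, 0 < y -> y <= x -> W k 1 x <= cc k 1 / y ^ (1 + k).
Proof.
  intros. destruct (W_bounds k 1 x ltac:(lra)) as [_ H1]. eapply Rle_trans; [exact H1|].
  apply div_pow_anti; auto. apply cc_nonneg.
Qed.

Lemma Bp_ge1 : forall K k, (k <= K)%nat -> (1 <= Bp K k)%nat.
Proof.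
  intros. assert (H1 := u_pos K k H). apply INR_lt in H1. unfold Bp.
  assert (1 <= 2^K)%nat by (apply Nat.le_succ_l, Nat.neq_0_lt_0, Nat.pow_nonzero; lia). nia.
Qed.

Lemma Bp_mono : forall K k, (k <= K)%nat -> (Bp K K <= Bp K k)%nat.
Proof.
  intros. unfold Bp. apply Nat.mul_le_mono_l. unfold u. apply Nat.div_le_compat_l.
  split. apply Dd_pos. unfold Dd. apply Nat.mul_le_mono; [apply Nat.mul_le_mono|]; lia.
Qed.

Lemma INR_Bp_pos : forall K k, (k <= K)%nat -> 0 < INR (Bp K k).
Proof. intros. apply lt_0_INR. assert (H1 := Bp_ge1 K k H). lia. Qed.

Lemma dlt_nonneg : forall K, 0 <= dlt K.
Proof.
  intros. unfold dlt. unfold Rdiv. apply Rmult_le_pos. apply cc_nonneg.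
  left. apply Rinv_0_lt_compat. apply pow_lt. apply INR_Bp_pos. lia.
Qed.

Lemma lbS_nonneg : forall K j, (j <= K)%nat -> 0 <= lbS K j.
Proof.
  intros. unfold lbS, Rdiv. apply Rmult_le_pos. apply Rmult_le_pos. apply pos_INR. apply cc_nonneg.
  apply Rlt_le, Rinv_0_lt_compat, pow_lt. apply INR_Bp_pos; auto.
Qed.

Lemma level_lower : forall K j, (S j <= K)%nat ->
  lbS K j <= sumL (vals (Bp K (S j)) (repeat (tm (S j)) (mS K j))).
Proof.
  intros K j Hj. unfold lbS. unfold Rdiv. rewrite Rmult_assoc. apply sum_lower.
  intros i Hi. 
  assert (Hst := Bp_step K j Hj).
  assert (Hp := INR_Bp_pos K (S j) Hj).
  set (x := INR (Bp K (S j) + i * 2 ^ S j)).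
  assert (Hx : 0 < x) by (unfold x; rewrite plus_INR; assert (0 <= INR (i * 2^S j)) by apply pos_INR; lra).
  destruct (W_bounds (S j) 1 x Hx) as [H1 _].
  eapply Rle_trans; [|exact H1]. fold (Rdiv (cc (S j) 1) (INR (Bp K j) ^ (1 + S j))).
  apply div_pow_anti. apply cc_nonneg. 
  assert (1 <= 2^(S j)) by (apply pow_R1_Rle; lra). lra.
  assert (Hle : (Bp K (S j) + i * 2 ^ S j + 2 ^ S j <= Bp K j)%nat) by nia.
  apply le_INR in Hle. rewrite plus_INR, INR_pow2 in Hle. fold x in Hle. lra.
Qed.

Lemma levels_good : forall K d j, (S j + d = K)%nat ->
  Good (Bp K K) (Bp K j - Bp K K) (lbS K j) (dlt K).
Proof.
  intros K d. induction d as [|d IH]; intros j Hjd.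
  -
    assert (Hj : (S j <= K)%nat) by lia.
    assert (Hm := mS_ge1 K j Hj).
    assert (Hst := Bp_step K j Hj).
    assert (EK : S j = K) by lia.
    assert (HB := INR_Bp_pos K K (le_n K)).
    assert (G := level_Good (S j) (dlt K) (mS K j - 1) (Bp K (S j)) (Bp_ge1 K (S j) Hj)).
    rewrite EK in G.
    replace (S (mS K j - 1)) with (mS K j) in G by lia.
    assert (Hlen : (mS K j * 2 ^ K = Bp K j - Bp K K)%nat) by (rewrite EK in Hst; lia).
    rewrite Hlen in G.
    eapply Good_mono; [| apply G].
    + assert (H := level_lower K j Hj). rewrite EK in H. exact H.
    + intros n Hn. 
      assert (Hx : INR (Bp K K) <= INR n) by (apply le_INR; auto).
      change (W (S K) 1 (INR n)) with (W K 1 (INR n) - W K 1 (INR n + 2^K)).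
      assert (0 < W K 1 (INR n + 2^K)) by (apply W_pos; assert (0 < 2^K) by (apply pow_lt; lra); lra).
      assert (W K 1 (INR n) <= dlt K) by (apply upper_from; lra).
      lra.
    + apply upper_from; auto. apply le_INR. apply Nat.le_add_r.
  - assert (Hj : (S (S j) <= K)%nat) by lia.
    assert (IH' := IH (S j) ltac:(lia)).
    assert (Hm := mS_ge1 K j ltac:(lia)).
    assert (Hst := Bp_step K j ltac:(lia)).
    assert (Hd := dlt_nonneg K).
    assert (Hl1 := lbS_nonneg K (S j) ltac:(lia)).
    assert (G := level_Good (S j) (lbS K (S j) + dlt K) (mS K j - 1) (Bp K (S j)) (Bp_ge1 K (S j) ltac:(lia))).
    replace (S (mS K j - 1)) with (mS K j) in G by lia.
    assert (HBm := Bp_mono K (S j) ltac:(lia)).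
    assert (G2 : forall n, (Bp K (S j) <= n)%nat -> W (S (S j)) 1 (INR n) <= lbS K (S j) + dlt K).
    { intros n Hn.
      assert (Hm2 := mS_ge1 K (S j) Hj).
      assert (HB := INR_Bp_pos K (S j) ltac:(lia)).
      assert (Hx : INR (Bp K (S j)) <= INR n) by (apply le_INR; auto).
      assert (H1 : W (S (S j)) 1 (INR n) <= cc (S (S j)) 1 / INR (Bp K (S j)) ^ (1 + S (S j))) by (apply upper_from; lra).
      assert (H2 : cc (S (S j)) 1 / INR (Bp K (S j)) ^ (1 + S (S j)) <= lbS K (S j)).
      { unfold lbS. unfold Rdiv. rewrite Rmult_assoc. 
        assert (0 <= cc (S (S j)) 1 * / INR (Bp K (S j)) ^ (1 + S (S j))).
        { apply Rmult_le_pos. apply cc_nonneg. apply Rlt_le, Rinv_0_lt_compat, pow_lt; lra. }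
        assert (1 <= INR (mS K (S j))) by (apply (le_INR 1); auto). nra. }
      lra. }
    assert (G3 : W (S j) 1 (INR (Bp K (S j) + (mS K j - 1) * 2 ^ S j)) <= lbS K (S j) + dlt K).
    { assert (H := AR1 K j Hj). lra. }
    specialize (G G2 G3).
    replace (Bp K (S j)) with (Bp K K + (Bp K (S j) - Bp K K))%nat in G at 1 by lia.
    assert (C := Good_combine _ _ _ _ _ _ G IH').
    replace (Bp K (S j) - Bp K K + mS K j * 2 ^ S j)%nat with (Bp K j - Bp K K)%nat in C by lia.
    eapply Good_mono; [| exact C].
    assert (H := level_lower K j ltac:(lia)). lra.
Qed.

Lemma construction : forall tau K Lam N, (1 <= K)%nat -> (1 <= Lam)%nat ->
  exp (Rabs tau + 1) <= INR Lam -> (Nreq Lam K <= N)%nat -> m_N N tau <= dlt K.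
Proof.
  intros tau K Lam N HK HL HLam HN.
  assert (HB0 := Bp0_le K Lam N HL HN).
  assert (HB0p := INR_Bp_pos K 0 ltac:(lia)).
  assert (HLR : 1 <= INR Lam) by (apply (le_INR 1); auto).
  assert (HB0N : (Bp K 0 <= N)%nat) by (apply INR_le; nra).
  assert (Hd := dlt_nonneg K).
  assert (Hl0 := lbS_nonneg K 0 ltac:(lia)).
  assert (G2 : forall n, (Bp K 0 <= n)%nat -> W 1 1 (INR n) <= lbS K 0 + dlt K).
  { intros n Hn.
    assert (Hm2 := mS_ge1 K 0 HK).
    assert (Hx : INR (Bp K 0) <= INR n) by (apply le_INR; auto).
    assert (H1 : W 1 1 (INR n) <= cc 1 1 / INR (Bp K 0) ^ (1 + 1)) by (apply upper_from; lra).
    assert (H2 : cc 1 1 / INR (Bp K 0) ^ (1 + 1) <= lbS K 0).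
    { unfold lbS. unfold Rdiv. rewrite Rmult_assoc. 
      assert (0 <= cc 1 1 * / INR (Bp K 0) ^ (1 + 1)).
      { apply Rmult_le_pos. apply cc_nonneg. apply Rlt_le, Rinv_0_lt_compat, pow_lt; lra. }
      assert (1 <= INR (mS K 0)) by (apply (le_INR 1); auto). nra. }
    lra. }
  assert (G3 : W 0 1 (INR (Bp K 0 + (N - Bp K 0) * 2 ^ 0)) <= lbS K 0 + dlt K).
  { replace (Bp K 0 + (N - Bp K 0) * 2 ^ 0)%nat with N by (simpl; lia).
    assert (H := AR0 K Lam N HL HK HN). lra. }
  assert (G := level_Good 0 (lbS K 0 + dlt K) (N - Bp K 0) (Bp K 0) (Bp_ge1 K 0 ltac:(lia)) G2 G3).
  assert (HBm := Bp_mono K 0 ltac:(lia)).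
  replace (Bp K 0) with (Bp K K + (Bp K 0 - Bp K K))%nat in G at 1 by lia.
  assert (IH := levels_good K (K - 1) 0 ltac:(lia)).
  assert (C := Good_combine _ _ _ _ _ _ G IH).
  replace (Bp K 0 - Bp K K + S (N - Bp K 0) * 2 ^ 0)%nat with (N + 1 - Bp K K)%nat in C by (simpl; lia).
  assert (Hh := harmonic (S (N - Bp K 0)) (Bp K 0) (Bp_ge1 K 0 ltac:(lia))).
  replace (Bp K 0 + S (N - Bp K 0))%nat with (N + 1)%nat in Hh by lia.
  assert (Hln : Rabs tau + 1 <= ln (INR (N + 1)) - ln (INR (Bp K 0))).
  { rewrite <- (ln_exp (Rabs tau + 1)).
    assert (0 < exp (Rabs tau + 1)) by apply exp_pos.
    apply Rle_trans with (ln (INR Lam)). apply ln_le; auto.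
    rewrite <- ln_div by (try lra; apply lt_0_INR; lia). apply ln_le. lra.
    apply Rmult_le_reg_r with (INR (Bp K 0)); auto. unfold Rdiv. rewrite Rmult_assoc, Rinv_l by lra.
    rewrite plus_INR. simpl (INR 1). nra. }
  set (L0 := (Bp K K - 1)%nat).
  set (q0 := alt 1 L0).
  destruct (alt_bound L0 1 1 ltac:(left; reflexivity) (le_n 1)) as [Ha1 Ha2].
  fold q0 in Ha1, Ha2. simpl (INR 1) in Ha2. rewrite Rmult_1_l in Ha1, Ha2.
  destruct (C (tau - aux 1 q0)) as [q [Hlq [Hpq Hdq]]].
  { assert (Rabs (tau - aux 1 q0) <= Rabs tau + 1).
    { unfold Rabs at 1. destruct Rcase_abs; unfold Rdiv in Ha2; rewrite Rinv_1, Rmult_1_l in Ha2;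
      assert (Habs := Rabs_le tau); unfold Rabs in *; destruct Rcase_abs; lra. }
    lra. }
  assert (HBK := Bp_ge1 K K (le_n K)).
  assert (Hin := in_sign_vectors (q0 ++ q) ltac:(apply Forall_app; split; auto; apply alt_pm; left; auto)).
  rewrite length_app, Hlq in Hin. unfold q0 in Hin. rewrite alt_length in Hin. fold q0 in Hin.
  replace (L0 + (N + 1 - Bp K K))%nat with N in Hin by (unfold L0; lia).
  eapply Rle_trans; [apply (m_N_le N tau _ Hin)|].
  unfold signed_harmonic. rewrite aux_app. unfold q0 at 2. rewrite alt_length.
  replace (1 + L0)%nat with (Bp K K) by (unfold L0; lia).
  replace (aux 1 q0 + aux (Bp K K) q - tau) with (- (tau - aux 1 q0 - aux (Bp K K) q)) by ring.
  rewrite Rabs_Ropp. exact Hdq.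
Qed.


Lemma exp_pow : forall x n, 0 < x -> exp (INR n * ln x) = x ^ n.
Proof.
  intros x n Hx. induction n. simpl. rewrite Rmult_0_l. apply exp_0.
  rewrite S_INR, Rmult_plus_distr_r, exp_plus, IHn, Rmult_1_l, exp_ln by auto. simpl. ring.
Qed.

Definition Dexp (K : nat) : R :=
  INR (tri K) * ln 2 + INR K * ln (INR K + 1) - INR (K * (K + 1)) * ln 2.

Lemma dlt_le_exp : forall K, dlt K <= exp (Dexp K).
Proof.
  intros K. unfold Dexp, dlt.
  assert (HK : 0 <= INR K) by apply pos_INR.
  unfold Rminus. rewrite !exp_plus, exp_Ropp, !exp_pow by lra.
  assert (H1 := cc_upper K 1). replace (1 + K)%nat with (S K) in H1 by lia. rewrite S_INR in H1.
  replace (INR K + 1) with (1 + INR K) in * by ring.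
  assert (H2 : 2 ^ (K * (K + 1)) <= INR (Bp K K) ^ (1 + K)).
  { rewrite pow_mult. replace (1 + K)%nat with (K + 1)%nat by lia. apply pow_incr. split.
    apply pow_le; lra. rewrite Bp_R. assert (H := u_pos K K (le_n K)). 
    assert (1 <= INR (u K K)). { assert (0 <= INR (2*K+3)) by apply pos_INR. assert (Hu1 : (1 <= u K K)%nat) by (apply INR_lt in H; lia). apply (le_INR 1) in Hu1. exact Hu1. }
    assert (0 < 2^K) by (apply pow_lt; lra). nra. }
  assert (H3 : 0 < 2 ^ (K * (K + 1))) by (apply pow_lt; lra).
  assert (H4 : 0 <= 2 ^ tri K * (1 + INR K) ^ K) by (apply Rmult_le_pos; apply pow_le; lra).
  replace (2 ^ tri K * (1 + INR K) ^ K * / 2 ^ (K * (K + 1))) with ((2 ^ tri K * (1 + INR K) ^ K) / 2 ^ (K * (K + 1))) by (unfold Rdiv; ring).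
  apply div_le_cross; auto. apply pow_lt. apply INR_Bp_pos; auto.
  assert (0 <= cc K 1) by apply cc_nonneg. nra.
Qed.

Definition Qc (a C A : R) := 16*C*a + 2 + 5*a/2 + 64*C + 2*C*a*A + 16*C*A + C*A*A.

Lemma poly_final : forall a C A s, 0 < a -> 0 < C -> C * a < 1/2 -> 0 <= A -> 1 <= s ->
  Qc a C A < (a/2 - C*a*a) * s ->
  C * (a*s*s + 8*s + A)^2 + (s*s - 4) * (2*s) < (s*s*s*s - 5*s*s + 4) * (a/2).
Proof.
  intros a C A s Ha HC HCa HA Hs HQ.
  set (e := a/2 - C*a*a) in *.
  assert (He : 0 < e) by (unfold e; nra).
  assert (Hs3 : 0 < s*s*s) by (apply Rmult_lt_0_compat; nra).
  assert (H1 : s*s*s*(e*s - Qc a C A) > 0) by (apply Rmult_lt_0_compat; lra).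
  unfold Qc in H1.
  assert (Hs2 : s*s <= s*s*s) by nra.
  assert (Hs1 : s <= s*s*s) by nra.
  assert (Hs0 : 1 <= s*s*s) by nra.
  assert (c1 : 0 <= 5*a/2 + 64*C + 2*C*a*A) by (assert (0 <= C*a*A) by (apply Rmult_le_pos; nra); nra).
  assert (c2 : 0 <= 16*C*A) by nra.
  assert (c3 : 0 <= C*A*A) by (apply Rmult_le_pos; nra).
  assert (T1 : (5*a/2 + 64*C + 2*C*a*A) * (s*s) <= (5*a/2 + 64*C + 2*C*a*A) * (s*s*s)) by (apply Rmult_le_compat_l; lra).
  assert (T2 : 16*C*A * s <= 16*C*A * (s*s*s)) by (apply Rmult_le_compat_l; lra).
  assert (T3 : C*A*A <= C*A*A * (s*s*s)) by (rewrite <- (Rmult_1_r (C*A*A)) at 1; apply Rmult_le_compat_l; lra).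
  unfold e in H1. 
  replace ((a * s * s + 8 * s + A) ^ 2) with ((a*s*s + 8*s + A)*(a*s*s + 8*s + A)) by ring.
  nra.
Qed.

Lemma Dexp_eq : forall K, Dexp K = - (INR K * INR K + 3 * INR K) / 2 * ln 2 + INR K * ln (INR K + 1).
Proof.
  intros K. unfold Dexp. assert (H := tri_eq K).
  rewrite mult_INR, plus_INR. simpl (INR 1).
  replace (INR (tri K)) with (INR K * (INR K - 1) / 2) by lra. field.
Qed.

Lemma Nreq_R : forall Lam K, INR (Nreq Lam (S K)) <= INR Lam * 2^K * 4 * (INR K + 4)^4.
Proof.
  intros Lam K. unfold Nreq, Yp, Pp. rewrite !mult_INR, INR_pow2, !plus_INR, !mult_INR, !S_INR.
  simpl (INR 1). simpl (INR 2). simpl (INR 3). simpl (INR 4).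
  assert (HK := pos_INR K). assert (HL := pos_INR Lam). assert (H2 : 0 < 2^K) by (apply pow_lt; lra).
  simpl pow. 
  assert (E : (2 * (INR K + 1) + 4) * ((INR K + 1 + 1) * (INR K + 1 + 2) * (INR K + 1 + 3)) * 2 <= 4 * ((INR K + 4) * ((INR K + 4) * ((INR K + 4) * ((INR K + 4) * 1))))).
  { nra. }
  assert (0 <= INR Lam * 2^K) by (apply Rmult_le_pos; lra).
  change (INR 0) with 0.
  assert (HH := Rmult_le_compat_l _ _ _ H E). nra.
Qed.

Lemma lnN_bound : forall Lam K N, (1 <= N)%nat -> (1 <= Lam)%nat -> (N < Nreq Lam (S K))%nat ->
  ln (INR N) <= ln (INR Lam) + (INR K + 2) * ln 2 + 4 * ln (INR K + 4).
Proof.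
  intros Lam K N HN HL HNK.
  assert (HNp : 0 < INR N) by (apply lt_0_INR; lia).
  assert (HLp : 0 < INR Lam) by (apply lt_0_INR; lia).
  assert (HK := pos_INR K).
  assert (H1 : INR N <= INR Lam * 2^K * 4 * (INR K + 4)^4).
  { apply Rle_trans with (INR (Nreq Lam (S K))). apply le_INR; lia. apply Nreq_R. }
  apply Rle_trans with (ln (INR Lam * 2^K * 4 * (INR K + 4)^4)). apply ln_le; auto.
  assert (0 < 2^K) by (apply pow_lt; lra).
  assert (0 < (INR K + 4)^4) by (apply pow_lt; lra).
  assert (P1 : 0 < INR Lam * 2^K) by (apply Rmult_lt_0_compat; lra).
  assert (P2 : 0 < INR Lam * 2^K * 4) by (apply Rmult_lt_0_compat; lra).
  rewrite (ln_mult _ _ P2) by lra. rewrite (ln_mult _ _ P1) by lra. rewrite ln_mult by lra.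
  rewrite !ln_pow by lra.
  replace 4 with (2 * 2) at 1 by ring. rewrite ln_mult by lra. replace (INR 4) with 4 by (simpl; ring). lra.
Qed.

Lemma Nreq_lt : forall Lam K, (1 <= Lam)%nat -> (Nreq Lam K < Nreq Lam (S K))%nat.
Proof.
  intros. unfold Nreq, Yp, Pp. rewrite Nat.pow_succ_r'.
  assert (1 <= 2^K)%nat by (apply Nat.le_succ_l, Nat.neq_0_lt_0, Nat.pow_nonzero; lia).
  set (t := (2^K)%nat) in *. nia.
Qed.

Lemma bracket : forall Lam K0 N, (1 <= Lam)%nat -> (Nreq Lam K0 <= N)%nat ->
  exists K, (K0 <= K)%nat /\ (Nreq Lam K <= N)%nat /\ (N < Nreq Lam (S K))%nat.
Proof.
  intros Lam K0 N HL. induction N as [|N IH]; intros HN.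
  - assert (H := Nreq_lt Lam K0 HL). exists K0. lia.
  - destruct (Nat.le_gt_cases (Nreq Lam K0) N) as [H|H].
    + destruct (IH H) as [K [H1 [H2 H3]]].
      destruct (Nat.lt_ge_cases (S N) (Nreq Lam (S K))) as [H4|H4].
      * exists K; lia.
      * exists (S K). assert (H5 := Nreq_lt Lam (S K) HL). lia.
    + exists K0. assert (H5 := Nreq_lt Lam K0 HL). lia.
Qed.

Theorem theorem1p1 :
  forall (tau C : R), 0 < C -> C < 1 / ln 4 ->
  exists N0 : nat, forall N : nat, (N0 <= N)%nat ->
    m_N N tau < exp (- C * (ln (INR N)) ^ 2).
Proof.
  intros tau C HC HC4.
  set (a := ln 2).
  assert (Ha : 0 < a) by (unfold a; rewrite <- ln_1; apply ln_increasing; lra).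
  assert (Hln4 : ln 4 = 2 * a) by (unfold a; replace 4 with (2*2) by ring; rewrite ln_mult by lra; ring).
  rewrite Hln4 in HC4.
  assert (HCa : C * a < 1/2).
  { apply Rmult_lt_compat_r with (r := 2 * a) in HC4; [|lra].
    replace (1 / (2 * a) * (2 * a)) with 1 in HC4 by (field; lra). lra. }
  destruct (INR_unbounded (exp (Rabs tau + 1))) as [L0 HL0].
  set (Lam := (L0 + 4)%nat).
  assert (HLam : exp (Rabs tau + 1) <= INR Lam) by (unfold Lam; rewrite plus_INR; simpl (INR 4); 
     replace (INR 4) with 4 by (simpl; ring); lra).
  assert (HL1 : (1 <= Lam)%nat) by (unfold Lam; lia).
  assert (HL4 : 4 <= INR Lam) by (unfold Lam; rewrite plus_INR; replace (INR 4) with 4 by (simpl; ring); assert (0 <= INR L0) by apply pos_INR; lra).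
  set (l := ln (INR Lam)).
  set (A := l - 2 * a).
  assert (HA : 0 <= A) by (unfold A, l; rewrite <- Hln4; assert (ln 4 <= ln (INR Lam)) by (apply ln_le; lra); lra).
  set (e := a/2 - C*a*a).
  assert (He : 0 < e) by (unfold e; nra).
  set (Q := Qc a C A).
  destruct (INR_unbounded ((Q / e) ^ 2)) as [K1 HK1].
  set (K0 := S K1).
  exists (Nreq Lam K0). intros N HN.
  destruct (bracket Lam K0 N HL1 HN) as [K [HK0 [HK1' HK2]]].
  assert (HK : (1 <= K)%nat) by (unfold K0 in HK0; lia).
  assert (Hm := construction tau K Lam N HK HL1 HLam HK1').
  assert (Hd := dlt_le_exp K).
  assert (HN1 : (1 <= N)%nat).
  { assert (1 <= 2^K)%nat by (apply Nat.le_succ_l, Nat.neq_0_lt_0, Nat.pow_nonzero; lia).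
    assert (1 <= Nreq Lam K)%nat by (unfold Nreq, Yp, Pp; set (t := (2^K)%nat) in *; nia). lia. }
  assert (HlnN := lnN_bound Lam K N HN1 HL1 HK2).
  assert (HlnN0 : 0 <= ln (INR N)).
  { rewrite <- ln_1. apply ln_le. lra. apply (le_INR 1); auto. }
  assert (HKR : 0 <= INR K) by apply pos_INR.
  assert (HKK0 : INR K1 < INR K) by (apply lt_INR; unfold K0 in HK0; lia).
  set (s := sqrt (INR K + 4)).
  assert (Hss : s * s = INR K + 4) by (unfold s; apply sqrt_sqrt; lra).
  assert (Hs0 : 0 <= s) by (unfold s; apply sqrt_pos).
  assert (Hs1 : 1 <= s) by nra.
  assert (HsQ : Q < e * s).
  { assert (H : (Q / e) ^ 2 < s * s) by lra.
    destruct (Rle_lt_dec (Q / e) 0) as [Hq|Hq].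
    - assert (Q <= 0). { apply Rmult_le_reg_r with (/ e). apply Rinv_0_lt_compat; lra. rewrite Rmult_0_l. exact Hq. }
      nra.
    - assert (Q / e < s) by nra.
      apply Rmult_lt_reg_r with (/ e). apply Rinv_0_lt_compat; lra.
      replace (e * s * / e) with s by (field; lra). exact H0. }
  assert (Hz : ln (INR K + 4) <= 2 * s).
  { rewrite <- Hss. rewrite ln_mult by lra.
    assert (H := exp_ineq1_le (ln s)). rewrite exp_ln in H by lra. lra. }
  assert (Hz1 : ln (INR K + 1) <= ln (INR K + 4)) by (apply ln_le; lra).
  assert (Hz0 : 0 <= ln (INR K + 1)).
  { rewrite <- ln_1. apply ln_le; lra. }
  assert (HP := poly_final a C A s Ha HC HCa HA Hs1 ltac:(unfold Q, e in HsQ; lra)).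
  assert (HM : ln (INR N) <= a * s * s + 8 * s + A).
  { unfold A, l. fold a in HlnN. nra. }
  assert (HM2 : ln (INR N) ^ 2 <= (a * s * s + 8 * s + A) ^ 2).
  { simpl. rewrite !Rmult_1_r. apply Rmult_le_compat; lra. }
  assert (HD : Dexp K < - C * ln (INR N) ^ 2).
  { rewrite Dexp_eq. fold a.
    assert (HKs : INR K = s * s - 4) by lra.
    assert (T1 : INR K * ln (INR K + 1) <= (s * s - 4) * (2 * s)).
    { rewrite <- HKs. apply Rmult_le_compat_l; lra. }
    assert (T2 : (INR K * INR K + 3 * INR K) = s*s*s*s - 5*s*s + 4) by (rewrite HKs; ring).
    rewrite T2.
    assert (T3 : C * ln (INR N) ^ 2 <= C * (a * s * s + 8 * s + A) ^ 2) by (apply Rmult_le_compat_l; lra).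
    lra. }
  eapply Rle_lt_trans; [exact Hm|]. eapply Rle_lt_trans; [exact Hd|].
  apply exp_increasing. exact HD.
Qed.
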